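(* Let $T>0$, $u\in\mathbb{R}$ and $w(v)=e^{-(v-u)^2/(2T)}$ on $(0,\infty)$. Let $\{B_n\}_{n\ge0}$ be the orthonormal polynomials on $(0,\infty)$ with respect to $w$ ($\deg B_n=n$, positive leading coefficient, $\int_0^\infty B_mB_n w\,dv=\delta_{mn}$), and let $\alpha_n,\beta_n$ be the coefficients of their three-term recurrence $$\sqrt{\beta_{n+1}}\,B_{n+1}=(v-\alpha_n)B_n-\sqrt{\beta_n}\,B_{n-1},\qquad \beta_0=0,\ B_{-1}=0,$$ i.e. $\alpha_n=\int_0^\infty vB_n^2w\,dv$ and $\sqrt{\beta_{n+1}}=\int_0^\infty vB_nB_{n+1}w\,dv$. Then $\alpha_0=m_1/m_0$ with $m_i=\int_0^\infty v^iw(v)\,dv$, and for all $n\ge0$, $$\beta_{n+1}=2Tn+T-\beta_n+u\alpha_n-\alpha_n^2,\qquad \alpha_{n+1}=\frac{T}{\beta_{n+1}}\sum_{k=0}^n\alpha_k-\alpha_n+u.$$ *)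

(* Defs.v *)
From Stdlib Require Import Reals.
Open Scope R_scope.

Definition weight (T u : R) (v : R) : R := exp (- ((v - u) ^ 2) / (2 * T)).

Definition improper_integral_0_inf (f : R -> R) (l : R) : Prop :=
  exists F : R -> R,
    (forall b : R, 0 <= b -> exists pr : Riemann_integrable f 0 b, RiemannInt pr = F b) /\
    (forall eps : R, eps > 0 -> exists M : R, forall b : R, b >= M -> Rabs (F b - l) < eps).

Definition poly_deg_pos_lead (p : R -> R) (n : nat) : Prop :=
  exists c : nat -> R, c n > 0 /\ forall x : R, p x = sum_f_R0 (fun k => c k * x ^ k) n.

(* Main.v *)
Require Import Defs.
From Stdlib Require Import Reals.
Open Scope R_scope.
From Stdlib Require Import Lra Lia FunctionalExtensionality ClassicalEpsilon.
From Coquelicot Require Import Coquelicot.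
Open Scope R_scope.

Notation II := improper_integral_0_inf.

Definition limi (F : R -> R) (l : R) : Prop :=
  forall eps : R, eps > 0 -> exists M : R, forall b : R, b >= M -> Rabs (F b - l) < eps.

Lemma RI_lin (f g : R -> R) (b l : R) (pr1 : Riemann_integrable f 0 b)
  (pr2 : Riemann_integrable g 0 b) :
  exists pr : Riemann_integrable (fun x => f x + l * g x) 0 b,
    RiemannInt pr = RiemannInt pr1 + l * RiemannInt pr2.
Proof.
  exists (RiemannInt_P10 l pr1 pr2). apply RiemannInt_P13.
Qed.

Lemma limi_lin F G a b l : limi F a -> limi G b ->
  limi (fun x => F x + l * G x) (a + l * b).
Proof.
  intros HF HG eps Heps.
  destruct (HF (eps / 2) ltac:(lra)) as [M1 H1].
  destruct (HG (eps / 2 / (Rabs l + 1))) as [M2 H2].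
  { apply Rdiv_lt_0_compat; [lra|]. pose proof (Rabs_pos l); lra. }
  exists (Rmax M1 M2). intros x Hx.
  specialize (H1 x ltac:(pose proof (Rmax_l M1 M2); lra)).
  specialize (H2 x ltac:(pose proof (Rmax_r M1 M2); lra)).
  replace (F x + l * G x - (a + l * b)) with ((F x - a) + l * (G x - b)) by ring.
  eapply Rle_lt_trans. apply Rabs_triang. rewrite Rabs_mult.
  assert (Rabs l * Rabs (G x - b) <= eps / 2).
  { pose proof (Rabs_pos l). pose proof (Rabs_pos (G x - b)).
    assert (Rabs (G x - b) * (Rabs l + 1) < eps/2).
    { apply (Rmult_lt_compat_r (Rabs l + 1)) in H2; [|lra].
      field_simplify in H2; lra. }
    nra. }
  lra.
Qed.

Lemma II_lin f g a b l : II f a -> II g b -> II (fun x => f x + l * g x) (a + l * b).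
Proof.
  intros [F [HF1 HF2]] [G [HG1 HG2]].
  exists (fun x => F x + l * G x). split.
  - intros x Hx. destruct (HF1 x Hx) as [p1 e1]. destruct (HG1 x Hx) as [p2 e2].
    destruct (RI_lin f g x l p1 p2) as [p e]. exists p. rewrite e, e1, e2. reflexivity.
  - apply limi_lin; assumption.
Qed.

Lemma II_zero : II (fun _ => 0) 0.
Proof.
  exists (fun _ => 0). split.
  - intros b Hb. exists (RiemannInt_P14 0 b 0). etransitivity; [apply RiemannInt_P15|]. ring.
  - intros eps He. exists 0. intros. rewrite Rminus_0_r, Rabs_R0. lra.
Qed.

Lemma II_ext f g a : (forall x, f x = g x) -> II f a -> II g a.
Proof. intros H. replace g with f; [auto|]. apply functional_extensionality; auto. Qed.

Lemma II_add f g a b : II f a -> II g b -> II (fun x => f x + g x) (a + b).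
Proof.
  intros H1 H2. pose proof (II_lin f g a b 1 H1 H2) as H.
  replace (a + b) with (a + 1 * b) by ring. eapply II_ext; [|exact H]. intros; simpl; ring.
Qed.

Lemma II_scal f a c : II f a -> II (fun x => c * f x) (c * a).
Proof.
  intros H. pose proof (II_lin _ f 0 a c II_zero H) as H'.
  replace (c * a) with (0 + c * a) by ring. eapply II_ext; [|exact H']. intros; simpl; ring.
Qed.

Lemma limi_unique F a b : limi F a -> limi F b -> a = b.
Proof.
  intros H1 H2. destruct (Req_dec a b) as [|Hne]; auto. exfalso.
  assert (Hp : Rabs (a - b) / 2 > 0) by (assert (a - b <> 0) by lra; apply Rabs_pos_lt in H; lra).
  destruct (H1 _ Hp) as [M1 G1]. destruct (H2 _ Hp) as [M2 G2].
  specialize (G1 (Rmax M1 M2) ltac:(pose proof (Rmax_l M1 M2); lra)).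
  specialize (G2 (Rmax M1 M2) ltac:(pose proof (Rmax_r M1 M2); lra)).
  pose proof (Rabs_triang (a - F (Rmax M1 M2)) (F (Rmax M1 M2) - b)).
  replace (a - F (Rmax M1 M2) + (F (Rmax M1 M2) - b)) with (a - b) in H by ring.
  rewrite Rabs_minus_sym in G1. lra.
Qed.

Lemma II_unique f a b : II f a -> II f b -> a = b.
Proof.
  intros [F [HF1 HF2]] [G [HG1 HG2]].
  apply (limi_unique F); auto.
  intros eps He. destruct (HG2 eps He) as [M HM]. exists (Rmax M 0). intros x Hx.
  destruct (HF1 x ltac:(pose proof (Rmax_r M 0); lra)) as [p1 e1].
  destruct (HG1 x ltac:(pose proof (Rmax_r M 0); lra)) as [p2 e2].
  rewrite <- e1, (RiemannInt_P5 p1 p2), e2. apply HM. pose proof (Rmax_l M 0); lra.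
Qed.

Lemma limi_trick h L L' : limi h L -> limi (fun b => b * h b) L' -> L = 0.
Proof.
  intros H1 H2. destruct (Req_dec L 0) as [|Hne]; auto. exfalso.
  assert (Hp : Rabs L / 2 > 0) by (pose proof (Rabs_pos_lt _ Hne); lra).
  destruct (H1 _ Hp) as [M1 G1]. destruct (H2 1 ltac:(lra)) as [M2 G2].
  set (b := Rmax (Rmax M1 M2) (Rmax 1 (2 * (Rabs L' + 1) / Rabs L + 1))).
  assert (b >= M1 /\ b >= M2 /\ b >= 1 /\ b >= 2 * (Rabs L' + 1) / Rabs L + 1) as [b1 [b2 [b3 b4]]].
  { unfold b. pose proof (Rmax_l (Rmax M1 M2) (Rmax 1 (2 * (Rabs L' + 1) / Rabs L + 1))).
    pose proof (Rmax_r (Rmax M1 M2) (Rmax 1 (2 * (Rabs L' + 1) / Rabs L + 1))).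
    pose proof (Rmax_l M1 M2). pose proof (Rmax_r M1 M2).
    pose proof (Rmax_l 1 (2 * (Rabs L' + 1) / Rabs L + 1)).
    pose proof (Rmax_r 1 (2 * (Rabs L' + 1) / Rabs L + 1)). lra. }
  specialize (G1 b b1). specialize (G2 b b2).
  assert (Rabs (h b) >= Rabs L / 2).
  { pose proof (Rabs_triang_inv L (L - h b)). rewrite Rabs_minus_sym in G1.
    replace (L - (L - h b)) with (h b) in H by ring. lra. }
  assert (Rabs (b * h b) <= Rabs L' + 1).
  { pose proof (Rabs_triang_inv (b * h b) L'). lra. }
  rewrite Rabs_mult, Rabs_right in H0 by lra.
  assert (b * (Rabs L / 2) <= Rabs L' + 1).
  { eapply Rle_trans; [|exact H0]. apply Rmult_le_compat_l; lra. }
  assert (2 * (Rabs L' + 1) / Rabs L * (Rabs L / 2) = Rabs L' + 1) by (field; lra).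
  assert ((2 * (Rabs L' + 1) / Rabs L + 1) * (Rabs L / 2) <= b * (Rabs L / 2)).
  { apply Rmult_le_compat_r; lra. }
  nra.
Qed.

Lemma II_ext2 f g a b : (forall x, f x = g x) -> a = b -> II f a -> II g b.
Proof. intros H1 H2 H3. subst b. eapply II_ext; eauto. Qed.

Lemma weight_deriv T u x : T > 0 ->
  derivable_pt_lim (weight T u) x (- (x - u) / T * weight T u x).
Proof.
  intros hT. apply is_derive_Reals. unfold weight. auto_derive; [auto|]. replace (- ((x + - u) * ((x + - u) * 1)) * / (2 * T)) with (- (x - u) ^ 2 / (2 * T)) by (field; lra). field; lra.
Qed.

Lemma weight_cont T u x : T > 0 -> continuity_pt (weight T u) x.
Proof.
  intros hT. apply derivable_continuous_pt. exists (- (x - u) / T * weight T u x).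
  apply weight_deriv; auto.
Qed.

Lemma cont_g T u f df x : T > 0 ->
  (forall x, derivable_pt_lim f x (df x)) -> (forall x, continuity_pt df x) ->
  continuity_pt (fun v => df v * weight T u v - / T * ((v - u) * f v * weight T u v)) x.
Proof.
  intros hT Hd Hc.
  assert (cf : continuity_pt f x).
  { apply derivable_continuous_pt. exists (df x). exact (Hd x). }
  assert (cw := weight_cont T u x hT).
  apply (continuity_pt_minus (fun v => df v * weight T u v)
           (fun v => / T * ((v - u) * f v * weight T u v))).
  - apply (continuity_pt_mult df (weight T u)); auto.
  - apply (continuity_pt_mult (fun _ => / T) (fun v => (v - u) * f v * weight T u v)).
    + apply continuity_pt_const. intros a b; reflexivity.
    + apply (continuity_pt_mult (fun v => (v - u) * f v) (weight T u)); auto.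
      apply (continuity_pt_mult (fun v => (v - u)) f); auto.
      apply (continuity_pt_minus (fun v => v) (fun _ => u)).
      * apply derivable_continuous_pt, derivable_pt_id.
      * apply continuity_pt_const. intros a b; reflexivity.
Qed.

Lemma ftc_fw T u f df b (pr : Riemann_integrable
   (fun v => df v * weight T u v - / T * ((v - u) * f v * weight T u v)) 0 b) :
  T > 0 -> (forall x, derivable_pt_lim f x (df x)) -> (forall x, continuity_pt df x) ->
  RiemannInt pr = f b * weight T u b - f 0 * weight T u 0.
Proof.
  intros hT Hd Hc. rewrite <- RInt_Reals.
  apply is_RInt_unique.
  apply (is_RInt_derive (fun v => f v * weight T u v)).
  - intros x _. apply is_derive_Reals.
    pose proof (derivable_pt_lim_mult f (weight T u) x _ _ (Hd x) (weight_deriv T u x hT)) as H.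
    replace (df x * weight T u x - / T * ((x - u) * f x * weight T u x))
      with (df x * weight T u x + f x * (- (x - u) / T * weight T u x)) by (field; lra).
    exact H.
  - intros x _. apply continuity_pt_filterlim. apply cont_g; auto.
Qed.

Lemma limit_fw T u f df a c : T > 0 ->
  (forall x, derivable_pt_lim f x (df x)) -> (forall x, continuity_pt df x) ->
  II (fun v => df v * weight T u v) a -> II (fun v => (v - u) * f v * weight T u v) c ->
  limi (fun b => f b * weight T u b) (a - / T * c + f 0 * weight T u 0).
Proof.
  intros hT Hd Hc Ha Hcc.
  destruct (II_lin _ _ _ _ (- / T) Ha Hcc) as [F [HF1 HF2]].
  intros eps He. destruct (HF2 eps He) as [M HM]. exists (Rmax M 0). intros x Hx.
  destruct (HF1 x ltac:(pose proof (Rmax_r M 0); lra)) as [p e].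
  assert (E : F x = f x * weight T u x - f 0 * weight T u 0).
  { rewrite <- e.
    assert (Hfe : (fun x0 : R => df x0 * weight T u x0 + - / T * ((x0 - u) * f x0 * weight T u x0))
        = (fun v => df v * weight T u v - / T * ((v - u) * f v * weight T u v))).
    { apply functional_extensionality; intros; ring. }
    revert p e. rewrite Hfe. intros p e. apply ftc_fw; auto. }
  specialize (HM x ltac:(pose proof (Rmax_l M 0); lra)).
  replace (f x * weight T u x - (a - / T * c + f 0 * weight T u 0))
    with (F x - (a + - / T * c)) by (rewrite E; ring). exact HM.
Qed.

Lemma ibp T u f df a c a2 c2 : T > 0 ->
  (forall x, derivable_pt_lim f x (df x)) -> (forall x, continuity_pt df x) ->
  II (fun v => df v * weight T u v) a -> II (fun v => (v - u) * f v * weight T u v) c ->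
  II (fun v => (f v + v * df v) * weight T u v) a2 ->
  II (fun v => (v - u) * (v * f v) * weight T u v) c2 ->
  c = T * (a + f 0 * weight T u 0).
Proof.
  intros hT Hd Hc Ha Hcc Ha2 Hc2.
  pose proof (limit_fw T u f df a c hT Hd Hc Ha Hcc) as L1.
  assert (Hd2 : forall x, derivable_pt_lim (fun v => v * f v) x (f x + x * df x)).
  { intros x. pose proof (derivable_pt_lim_mult (fun v => v) f x _ _ (derivable_pt_lim_id x) (Hd x)) as H.
    replace (f x + x * df x) with (1 * f x + x * df x) by ring. exact H. }
  assert (Hc2' : forall x, continuity_pt (fun v => f v + v * df v) x).
  { intros x. apply (continuity_pt_plus f (fun v => v * df v)).
    - apply derivable_continuous_pt. exists (df x). exact (Hd x).
    - apply (continuity_pt_mult (fun v => v) df); auto.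
      apply derivable_continuous_pt, derivable_pt_id. }
  pose proof (limit_fw T u (fun v => v * f v) _ a2 c2 hT Hd2 Hc2' Ha2 Hc2) as L2.
  assert (L2' : limi (fun b => b * (f b * weight T u b))
                  (a2 - / T * c2 + 0 * f 0 * weight T u 0)).
  { intros eps He. destruct (L2 eps He) as [M HM]. exists M. intros x Hx.
    rewrite <- Rmult_assoc. apply HM; auto. }
  pose proof (limi_trick _ _ _ L1 L2') as Z.
  apply (Rmult_eq_compat_l T) in Z. field_simplify in Z; [|lra].
  lra.
Qed.

Fixpoint sm (f : nat -> R) (n : nat) : R :=
  match n with O => 0 | S k => sm f k + f k end.

Lemma sum_f_R0_sm f n : sum_f_R0 f n = sm f (S n).
Proof. induction n; simpl in *. ring. rewrite IHn. simpl. ring. Qed.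

Lemma sm_lin f g l n : sm (fun k => f k + l * g k) n = sm f n + l * sm g n.
Proof. induction n; simpl. ring. rewrite IHn. ring. Qed.

Lemma sm_ext f g n : (forall k, (k < n)%nat -> f k = g k) -> sm f n = sm g n.
Proof. induction n; simpl; intros H. auto. rewrite IHn. rewrite H. auto. lia. intros; apply H; lia. Qed.

Lemma sm_zero n : sm (fun _ => 0) n = 0.
Proof. induction n; simpl. auto. rewrite IHn; ring. Qed.

Lemma sm_trunc g n m : (n <= m)%nat ->
  sm (fun k => if (k <? n)%nat then g k else 0) m = sm g n.
Proof.
  intros H. induction m.
  - assert (n = 0%nat) by lia. subst. auto.
  - destruct (Nat.eq_dec n (S m)) as [->|Hne].
    + simpl. f_equal. apply sm_ext. intros k Hk. destruct (Nat.ltb_spec k (S m)); lia || auto.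
      destruct (Nat.ltb_spec m (S m)); [auto|lia].
    + simpl. rewrite IHm by lia. destruct (Nat.ltb_spec m n); [lia|ring].
Qed.

Lemma sm_shift (c : nat -> R) x n :
  sm (fun k => (match k with O => 0 | S j => c j end) * x ^ k) (S n) =
  x * sm (fun k => c k * x ^ k) n.
Proof. induction n. simpl. ring. simpl in *. rewrite IHn. ring. Qed.

Definition Pc (n : nat) (p : R -> R) : Prop :=
  exists c : nat -> R, forall x, p x = sm (fun k => c k * x ^ k) n.

Lemma Pc_lin n p q l : Pc n p -> Pc n q -> Pc n (fun x => p x + l * q x).
Proof.
  intros [c Hc] [d Hd]. exists (fun k => c k + l * d k). intros x.
  rewrite Hc, Hd, <- sm_lin. apply sm_ext. intros; ring.
Qed.

Lemma Pc_mono n m p : (n <= m)%nat -> Pc n p -> Pc m p.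
Proof.
  intros H [c Hc]. exists (fun k => if (k <? n)%nat then c k else 0). intros x.
  rewrite Hc, <- (sm_trunc _ n m H). apply sm_ext. intros k _. destruct (k <? n)%nat; ring.
Qed.

Lemma Pc_x n p : Pc n p -> Pc (S n) (fun x => x * p x).
Proof.
  intros [c Hc]. exists (fun k => match k with O => 0 | S j => c j end). intros x.
  rewrite Hc, sm_shift. auto.
Qed.

Lemma poly_deriv (c : nat -> R) n x :
  derivable_pt_lim (fun x => sm (fun k => c k * x ^ k) n) x
     (sm (fun k => c k * INR k * x ^ pred k) n).
Proof.
  induction n; simpl.
  - apply derivable_pt_lim_const.
  - apply (derivable_pt_lim_plus (fun x => sm (fun k => c k * x ^ k) n) (fun x => c n * x ^ n)); auto.
    rewrite Rmult_assoc. apply derivable_pt_lim_scal. apply derivable_pt_lim_pow.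
Qed.

Lemma Pc_cont n p x : Pc n p -> continuity_pt p x.
Proof.
  intros [c Hc]. replace p with (fun x => sm (fun k => c k * x ^ k) n)
    by (apply functional_extensionality; intros; auto).
  apply derivable_continuous_pt. eexists. apply poly_deriv.
Qed.

Lemma dshift (c : nat -> R) x m :
  sm (fun k => c k * INR k * x ^ pred k) (S m) = sm (fun k => c (S k) * INR (S k) * x ^ k) m.
Proof. induction m. simpl. ring. change (sm (fun k => c k * INR k * x ^ pred k) (S (S m)))
  with (sm (fun k => c k * INR k * x ^ pred k) (S m) + c (S m) * INR (S m) * x ^ pred (S m)).
  rewrite IHm. simpl. ring. Qed.

Lemma xdshift (c : nat -> R) x m :
  x * sm (fun k => c k * INR k * x ^ pred k) m = sm (fun k => c k * INR k * x ^ k) m.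
Proof.
  induction m; simpl. ring. rewrite <- IHm. destruct m; simpl; ring.
Qed.

Section Main.
Variable T u : R.
Hypothesis hT : T > 0.
Variable B : nat -> R -> R.
Variable C : nat -> nat -> R.
Hypothesis hCpos : forall n, C n n > 0.
Hypothesis hCB : forall n x, B n x = sm (fun k => C n k * x ^ k) (S n).
Hypothesis horth : forall m n : nat,
     II (fun v => B m v * B n v * weight T u v) (if Nat.eqb m n then 1 else 0).

Let w := weight T u.

Definition Sp (n : nat) (p : R -> R) : Prop :=
  exists a : nat -> R, forall x, p x = sm (fun j => a j * B j x) n.

Lemma Sp_lin n p q l : Sp n p -> Sp n q -> Sp n (fun x => p x + l * q x).
Proof.
  intros [c Hc] [d Hd]. exists (fun k => c k + l * d k). intros x.
  rewrite Hc, Hd, <- sm_lin. apply sm_ext. intros; ring.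
Qed.

Lemma Sp_mono n m p : (n <= m)%nat -> Sp n p -> Sp m p.
Proof.
  intros H [c Hc]. exists (fun k => if (k <? n)%nat then c k else 0). intros x.
  rewrite Hc, <- (sm_trunc _ n m H). apply sm_ext. intros k _. destruct (k <? n)%nat; ring.
Qed.

Lemma Sp_zero n : Sp n (fun _ => 0).
Proof. exists (fun _ => 0). intros x. rewrite (sm_ext _ (fun _ => 0)). rewrite sm_zero; auto. intros; ring. Qed.

Lemma Sp_ext n p q : (forall x, p x = q x) -> Sp n p -> Sp n q.
Proof. intros H [c Hc]. exists c. intros; rewrite <- H; auto. Qed.

Lemma Sp_B j : Sp (S j) (B j).
Proof.
  exists (fun k => if Nat.eqb k j then 1 else 0). intros x. simpl.
  rewrite Nat.eqb_refl. rewrite (sm_ext _ (fun _ => 0)). rewrite sm_zero. ring.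
  intros k Hk. destruct (Nat.eqb_spec k j); [lia|ring].
Qed.

Lemma Pc_Sp n p : Pc n p -> Sp n p.
Proof.
  revert p. induction n; intros p [c Hc].
  - exists (fun _ => 0). intros x. rewrite Hc. reflexivity.
  - set (r := c n / C n n).
    assert (E : forall x, p x = sm (fun k => (c k - r * C n k) * x ^ k) n + r * B n x).
    { intros x. rewrite Hc, hCB. simpl.
      replace (fun k => (c k - r * C n k) * x ^ k) with (fun k => c k * x ^ k + (- r) * (C n k * x ^ k))
        by (apply functional_extensionality; intros; ring).
      rewrite sm_lin. unfold r. field. pose proof (hCpos n); lra. }
    apply (Sp_ext _ (fun x => sm (fun k => (c k - r * C n k) * x ^ k) n + r * B n x)).
    { intros; symmetry; auto. }
    apply Sp_lin.
    + apply (Sp_mono n); [lia|]. apply IHn. exists (fun k => c k - r * C n k). auto.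
    + apply Sp_B.
Qed.

Lemma Pc_B n : Pc (S n) (B n).
Proof. exists (C n). apply hCB. Qed.

Lemma Sp_xB j : Sp (S (S j)) (fun x => x * B j x).
Proof. apply Pc_Sp, Pc_x, Pc_B. Qed.

Lemma Sp_sm a n : Sp n (fun x => sm (fun j => a j * B j x) n).
Proof. exists a. auto. Qed.

Lemma Sp_x n p : Sp n p -> Sp (S n) (fun x => x * p x).
Proof.
  intros [a Ha]. apply (Sp_ext _ (fun x => x * sm (fun j => a j * B j x) n)).
  { intros; rewrite Ha; auto. }
  clear Ha. induction n; simpl.
  - apply (Sp_ext _ (fun _ => 0)). intros; ring. apply Sp_zero.
  - apply (Sp_ext _ (fun x => x * sm (fun j => a j * B j x) n + a n * (x * B n x))).
    { intros; ring. }
    apply Sp_lin. apply (Sp_mono (S n)); auto.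
    apply Sp_xB.
Qed.

Lemma orth_sum a n m :
  II (fun v => sm (fun j => a j * B j v) n * B m v * w v) (if (m <? n)%nat then a m else 0).
Proof.
  induction n; simpl.
  - eapply II_ext; [|exact II_zero]. intros; simpl; ring.
  - pose proof (II_lin _ _ _ _ (a n) IHn (horth n m)) as H.
    eapply II_ext in H.
    2:{ intros x. simpl. instantiate (1 := fun v => (sm (fun j => a j * B j v) n + a n * B n v) * B m v * w v). simpl. unfold w. ring. }
    replace (if (m <? S n)%nat then a m else 0) with
      ((if (m <? n)%nat then a m else 0) + a n * (if Nat.eqb n m then 1 else 0)); auto.
    destruct (Nat.eqb_spec n m); destruct (Nat.ltb_spec m n); destruct (Nat.ltb_spec m (S n));
      subst; try lia; ring.
Qed.

Lemma Sp_orth n p m : Sp n p -> (n <= m)%nat -> II (fun v => p v * B m v * w v) 0.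
Proof.
  intros [a Ha] Hm. pose proof (orth_sum a n m) as H.
  destruct (Nat.ltb_spec m n); [lia|].
  eapply II_ext; [|exact H]. intros; rewrite Ha; auto.
Qed.

Lemma Sp_coef n a p m : (forall x, p x = sm (fun j => a j * B j x) n) -> (m < n)%nat ->
  II (fun v => p v * B m v * w v) (a m).
Proof.
  intros Ha Hm. pose proof (orth_sum a n m) as H.
  destruct (Nat.ltb_spec m n); [|lia].
  eapply II_ext; [|exact H]. intros; rewrite Ha; auto.
Qed.

Definition IIex (g : R -> R) := exists l, II (fun v => g v * w v) l.

Lemma IIex_lin f g l : IIex f -> IIex g -> IIex (fun x => f x + l * g x).
Proof.
  intros [a Ha] [b Hb]. exists (a + l * b). eapply II_ext; [|exact (II_lin _ _ _ _ l Ha Hb)].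
  intros; simpl; ring.
Qed.

Lemma IIex_ext f g : (forall x, f x = g x) -> IIex f -> IIex g.
Proof. intros H [a Ha]. exists a. eapply II_ext; [|exact Ha]. intros; simpl; rewrite H; auto. Qed.

Lemma IIex_prod n k p q : Sp n p -> Sp k q -> IIex (fun x => p x * q x).
Proof.
  intros Hp [b Hb]. apply (IIex_ext (fun x => p x * sm (fun j => b j * B j x) k)).
  { intros; rewrite Hb; auto. }
  clear Hb. induction k; simpl.
  - exists 0. eapply II_ext; [|exact II_zero]. intros; simpl; ring.
  - apply (IIex_ext (fun x => p x * sm (fun j => b j * B j x) k + b k * (p x * B k x))).
    { intros; ring. }
    apply IIex_lin; auto.
    destruct (Nat.lt_ge_cases k n).
    + destruct Hp as [a Ha]. exists (a k). eapply Sp_coef; eauto.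
    + exists 0. eapply Sp_orth; eauto.
Qed.


Definition dB (n : nat) (x : R) : R := sm (fun k => C n k * INR k * x ^ pred k) (S n).

Lemma dB_deriv n x : derivable_pt_lim (B n) x (dB n x).
Proof.
  replace (B n) with (fun x => sm (fun k => C n k * x ^ k) (S n))
    by (apply functional_extensionality; intros; rewrite hCB; auto).
  apply poly_deriv.
Qed.

Lemma Pc_dB n : Pc n (dB n).
Proof. exists (fun k => C n (S k) * INR (S k)). intros x. unfold dB. rewrite dshift. auto. Qed.

Lemma dB_cont n x : continuity_pt (dB n) x.
Proof. eapply Pc_cont, Pc_dB. Qed.

Lemma B_cont n x : continuity_pt (B n) x.
Proof. eapply Pc_cont, Pc_B. Qed.

Lemma Sp_dB n : Sp n (dB n).
Proof. apply Pc_Sp, Pc_dB. Qed.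

Lemma Sp_xdB n : Sp (S n) (fun x => x * dB n x).
Proof. apply Sp_x, Sp_dB. Qed.

Lemma Sp_xdB_res n : Sp n (fun x => x * dB n x - INR n * B n x).
Proof.
  apply Pc_Sp. exists (fun k => C n k * (INR k - INR n)). intros x.
  unfold dB. rewrite xdshift, hCB.
  replace (sm (fun k => C n k * INR k * x ^ k) (S n) - INR n * sm (fun k => C n k * x ^ k) (S n))
   with (sm (fun k => C n k * INR k * x ^ k + (- INR n) * (C n k * x ^ k)) (S n))
   by (rewrite sm_lin; ring).
  simpl. rewrite (sm_ext _ (fun k => C n k * (INR k - INR n) * x ^ k)) by (intros; ring). ring.
Qed.

Lemma V1 n : II (fun v => v * dB n v * B n v * w v) (INR n).
Proof.
  pose proof (Sp_orth _ _ n (Sp_xdB_res n) (le_n n)) as H0.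
  pose proof (II_lin _ _ _ _ (INR n) H0 (horth n n)) as H.
  rewrite Nat.eqb_refl in H.
  refine (II_ext2 _ _ _ _ _ _ H); [intros; simpl; unfold w; ring|ring].
Qed.

Lemma IIx_sym f g a : II (fun v => v * f v * g v * w v) a -> II (fun v => v * g v * f v * w v) a.
Proof. intros H. eapply II_ext; [|exact H]. intros; simpl; ring. Qed.

Variable A Sg : nat -> R.
Hypothesis hA : forall n, II (fun v => v * B n v ^ 2 * weight T u v) (A n).
Hypothesis hS : forall n, II (fun v => v * B n v * B (S n) v * weight T u v) (Sg n).

Definition Bm1 (n : nat) : R -> R := match n with O => fun _ => 0 | S k => B k end.
Definition dBm1 (n : nat) : R -> R := match n with O => fun _ => 0 | S k => dB k end.
Definition Sm1 (n : nat) : R := match n with O => 0 | S k => Sg k end.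

Lemma hA' n : II (fun v => v * B n v * B n v * w v) (A n).
Proof. eapply II_ext; [|exact (hA n)]. intros; simpl; unfold w; ring. Qed.

Lemma three_term n : forall x, x * B n x = Sg n * B (S n) x + A n * B n x + Sm1 n * Bm1 n x.
Proof.
  destruct (Sp_xB n) as [a Ha].
  assert (Hc : forall m, (m < S (S n))%nat -> II (fun v => v * B n v * B m v * w v) (a m)).
  { intros m Hm. eapply II_ext; [|exact (Sp_coef _ _ _ m Ha Hm)]. intros; simpl; ring. }
  assert (a1 : a (S n) = Sg n) by exact (II_unique _ _ _ (Hc (S n) ltac:(lia)) (hS n)).
  assert (a0 : a n = A n) by exact (II_unique _ _ _ (Hc n ltac:(lia)) (hA' n)).
  assert (az : forall m, (S (S m) <= n)%nat -> a m = 0).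
  { intros m Hm. apply (II_unique _ _ _ (Hc m ltac:(lia))).
    apply IIx_sym. eapply II_ext; [|exact (Sp_orth _ _ n (Sp_xB m) Hm)]. intros; simpl; ring. }
  intros x. rewrite Ha. destruct n as [|k].
  - simpl. rewrite a1, a0. ring.
  - assert (am : a k = Sg k).
    { apply (II_unique _ _ _ (Hc k ltac:(lia))). apply IIx_sym. apply hS. }
    simpl. rewrite (sm_ext _ (fun _ => 0)). rewrite sm_zero. rewrite a1, a0, am. ring.
    intros j Hj. rewrite az by lia. ring.
Qed.

Lemma Bm1_val n : II (fun v => v * B n v * Bm1 n v * w v) (Sm1 n).
Proof.
  destruct n as [|k]; simpl.
  - eapply II_ext; [|exact II_zero]. intros; simpl; ring.
  - apply IIx_sym, hS.
Qed.

Lemma Bm1_zero n : II (fun v => v * B (S n) v * Bm1 n v * w v) 0.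
Proof.
  destruct n as [|k]; simpl.
  - eapply II_ext; [|exact II_zero]. intros; simpl; ring.
  - apply IIx_sym. eapply II_ext; [|exact (Sp_orth _ _ (S (S k)) (Sp_xB k) (le_n _))].
    intros; simpl; ring.
Qed.

Lemma VV n : II (fun v => (v * B n v) * (v * B n v) * w v) (Sg n ^ 2 + A n ^ 2 + Sm1 n ^ 2).
Proof.
  pose proof (II_lin _ _ _ _ (A n) (II_scal _ _ (Sg n) (hS n)) (hA' n)) as H1.
  pose proof (II_lin _ _ _ _ (Sm1 n) H1 (Bm1_val n)) as H2.
  refine (II_ext2 _ _ _ _ _ _ H2); [intros x; simpl; unfold w; transitivity (x * B n x * (Sg n * B (S n) x + A n * B n x + Sm1 n * Bm1 n x) * weight T u x); [ring|rewrite <- (three_term n x); ring]|ring].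
Qed.

Lemma VV2 n : II (fun v => (v * B (S n) v) * (v * B n v) * w v) (Sg n * A (S n) + A n * Sg n).
Proof.
  pose proof (II_lin _ _ _ _ (A n) (II_scal _ _ (Sg n) (hA' (S n))) (IIx_sym _ _ _ (hS n))) as H1.
  pose proof (II_lin _ _ _ _ (Sm1 n) H1 (Bm1_zero n)) as H2.
  refine (II_ext2 _ _ _ _ _ _ H2); [intros x; simpl; unfold w; transitivity (x * B (S n) x * (Sg n * B (S n) x + A n * B n x + Sm1 n * Bm1 n x) * weight T u x); [ring|rewrite <- (three_term n x); ring]|ring].
Qed.

Lemma Pc_res n : Pc (S n) (fun x => B (S n) x + (- (C (S n) (S n) / C n n)) * (x * B n x)).
Proof.
  set (r := C (S n) (S n) / C n n).
  exists (fun k => C (S n) k + (- r) * (match k with O => 0 | S j => C n j end)).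
  intros x. rewrite (hCB (S n)), (hCB n), <- sm_shift, <- sm_lin.
  change (sm (fun k => C (S n) k * x ^ k + - r * ((match k with O => 0 | S j => C n j end) * x ^ k)) (S (S n)))
    with (sm (fun k => C (S n) k * x ^ k + - r * ((match k with O => 0 | S j => C n j end) * x ^ k)) (S n)
          + (C (S n) (S n) * x ^ (S n) + - r * (C n n * x ^ (S n)))).
  replace (C (S n) (S n) * x ^ (S n) + - r * (C n n * x ^ (S n))) with 0.
  2:{ unfold r. field. pose proof (hCpos n); lra. }
  rewrite Rplus_0_r. apply sm_ext. intros; ring.
Qed.

Lemma Sg_nz n : Sg n <> 0.
Proof.
  set (r := C (S n) (S n) / C n n).
  pose proof (Sp_orth _ _ (S n) (Pc_Sp _ _ (Pc_res n)) (le_n _)) as H0.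
  pose proof (II_lin _ _ _ _ r H0 (hS n)) as H.
  pose proof (horth (S n) (S n)) as H1. rewrite Nat.eqb_refl in H1.
  assert (E : 1 = 0 + r * Sg n).
  { apply (II_unique _ _ _ H1). refine (II_ext2 _ _ _ _ _ _ H); [|ring].
    intros x; simpl; unfold w, r. field. pose proof (hCpos n); lra. }
  intros Z. rewrite Z in E. lra.
Qed.

Lemma dBm1_deriv n x : derivable_pt_lim (Bm1 n) x (dBm1 n x).
Proof. destruct n; simpl. apply derivable_pt_lim_const. apply dB_deriv. Qed.

Lemma DV n x : B n x + x * dB n x = Sg n * dB (S n) x + A n * dB n x + Sm1 n * dBm1 n x.
Proof.
  assert (E : (fun x => x * B n x) = (fun x => Sg n * B (S n) x + A n * B n x + Sm1 n * Bm1 n x)).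
  { apply functional_extensionality. apply three_term. }
  assert (D1 : derivable_pt_lim (fun x => x * B n x) x (1 * B n x + x * dB n x)).
  { apply (derivable_pt_lim_mult (fun v => v) (B n)). apply derivable_pt_lim_id. apply dB_deriv. }
  assert (D2 : derivable_pt_lim (fun x => Sg n * B (S n) x + A n * B n x + Sm1 n * Bm1 n x) x
                 (Sg n * dB (S n) x + A n * dB n x + Sm1 n * dBm1 n x)).
  { apply (derivable_pt_lim_plus (fun x => Sg n * B (S n) x + A n * B n x) (fun x => Sm1 n * Bm1 n x)).
    apply (derivable_pt_lim_plus (fun x => Sg n * B (S n) x) (fun x => A n * B n x)).
    apply derivable_pt_lim_scal, dB_deriv. apply derivable_pt_lim_scal, dB_deriv.
    apply derivable_pt_lim_scal, dBm1_deriv. }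
  rewrite E in D1. pose proof (uniqueness_limite _ _ _ _ D1 D2). lra.
Qed.

Lemma dBm1_zero n : II (fun v => v * dBm1 n v * B n v * w v) 0.
Proof.
  destruct n as [|k]; simpl.
  - eapply II_ext; [|exact II_zero]. intros; simpl; ring.
  - eapply II_ext; [|exact (Sp_orth _ _ (S k) (Sp_xdB k) (le_n _))]. intros; simpl; ring.
Qed.

Lemma Ystep n Ym Y : II (fun v => v * dB n v * Bm1 n v * w v) Ym ->
  II (fun v => v * dB (S n) v * B n v * w v) Y -> Sg n * Y = A n + Sm1 n * Ym.
Proof.
  intros HYm HY.
  pose proof (Sp_orth _ _ (S n) (Sp_xdB n) (le_n _)) as Z1.
  pose proof (II_lin _ _ _ _ 1 (hA' n) (II_lin _ _ _ _ (A n) (II_scal _ _ (Sg n) Z1) (V1 n))) as W1.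
  pose proof (II_lin _ _ _ _ (Sm1 n) W1 HYm) as W1'.
  pose proof (II_lin _ _ _ _ (A n) (II_scal _ _ (Sg n) HY) (V1 n)) as W2.
  pose proof (II_lin _ _ _ _ (Sm1 n) W2 (dBm1_zero n)) as W2'.
  assert (F1 : II (fun v => (B n v + v * dB n v) * (v * B n v) * w v) (1 * A n + 1 * (Sg n * 0 + A n * INR n) + Sm1 n * Ym)).
  { refine (II_ext2 _ _ _ _ _ _ W1'); [|ring]. intros x. simpl. unfold w.
    transitivity (x * B n x * B n x * weight T u x +
        x * dB n x * (Sg n * B (S n) x + A n * B n x + Sm1 n * Bm1 n x) * weight T u x); [ring|].
    rewrite <- (three_term n x). ring. }
  assert (F2 : II (fun v => (B n v + v * dB n v) * (v * B n v) * w v) (Sg n * Y + A n * INR n + Sm1 n * 0)).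
  { refine (II_ext2 _ _ _ _ _ _ W2'); [|ring]. intros x. simpl. unfold w.
    rewrite (DV n x). ring. }
  pose proof (II_unique _ _ _ F1 F2). lra.
Qed.

Lemma Yval n : II (fun v => v * dB (S n) v * B n v * w v) (sm A (S n) / Sg n).
Proof.
  induction n as [|k IH].
  - destruct (IIex_prod _ _ _ _ (Sp_xdB 1) (Sp_B 0)) as [Y HY].
    assert (HY' : II (fun v => v * dB 1 v * B 0 v * w v) Y) by (eapply II_ext; [|exact HY]; intros; simpl; ring).
    assert (HYm : II (fun v => v * dB 0 v * Bm1 0 v * w v) 0) by (eapply II_ext; [|exact II_zero]; intros; simpl; ring).
    pose proof (Ystep 0 0 Y HYm HY') as E. simpl in E.
    replace (sm A 1 / Sg 0) with Y; auto. simpl. pose proof (Sg_nz 0). apply (Rmult_eq_reg_l (Sg 0)); auto. rewrite E. field. auto.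
  - destruct (IIex_prod _ _ _ _ (Sp_xdB (S (S k))) (Sp_B (S k))) as [Y HY].
    assert (HY' : II (fun v => v * dB (S (S k)) v * B (S k) v * w v) Y) by (eapply II_ext; [|exact HY]; intros; simpl; ring).
    pose proof (Ystep (S k) _ Y IH HY') as E. simpl in E.
    replace (sm A (S (S k)) / Sg (S k)) with Y; auto.
    pose proof (Sg_nz k). pose proof (Sg_nz (S k)).
    change (sm A (S (S k))) with (sm A (S k) + A (S k)).
    apply (Rmult_eq_reg_l (Sg (S k))); auto. rewrite E. simpl. field. auto.
Qed.

Lemma cm f g x : continuity_pt f x -> continuity_pt g x -> continuity_pt (fun v => f v * g v) x.
Proof. intros; apply (continuity_pt_mult f g); auto. Qed.
Lemma ca f g x : continuity_pt f x -> continuity_pt g x -> continuity_pt (fun v => f v + g v) x.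
Proof. intros; apply (continuity_pt_plus f g); auto. Qed.
Lemma cid x : continuity_pt (fun v => v) x.
Proof. apply derivable_continuous_pt, derivable_pt_id. Qed.

Lemma caseA n : Sg n ^ 2 + A n ^ 2 + Sm1 n ^ 2 - u * A n = T * (1 + 2 * INR n).
Proof.
  set (f := fun v => v * B n v * B n v).
  set (df := fun v => B n v * B n v + v * dB n v * B n v + v * B n v * dB n v).
  assert (Hd : forall x, derivable_pt_lim f x (df x)).
  { intros x. unfold f, df.
    pose proof (derivable_pt_lim_mult (fun v => v) (B n) x _ _ (derivable_pt_lim_id x) (dB_deriv n x)) as D1.
    pose proof (derivable_pt_lim_mult (fun v => v * B n v) (B n) x _ _ D1 (dB_deriv n x)) as D2.
    replace (B n x * B n x + x * dB n x * B n x + x * B n x * dB n x)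
      with ((1 * B n x + x * dB n x) * B n x + x * B n x * dB n x) by ring.
    exact D2. }
  assert (Hc : forall x, continuity_pt df x).
  { intros x. unfold df. pose proof (B_cont n x). pose proof (dB_cont n x). pose proof (cid x).
    repeat first [assumption | apply ca | apply cm]. }
  assert (Ha : II (fun v => df v * weight T u v) (1 + 2 * INR n)).
  { pose proof (horth n n) as H0. rewrite Nat.eqb_refl in H0.
    pose proof (II_lin _ _ _ _ 1 (II_lin _ _ _ _ 1 H0 (V1 n)) (IIx_sym _ _ _ (V1 n))) as H.
    refine (II_ext2 _ _ _ _ _ _ H); [intros x; unfold df, w; simpl; ring|ring]. }
  assert (Hcc : II (fun v => (v - u) * f v * weight T u v) (Sg n ^ 2 + A n ^ 2 + Sm1 n ^ 2 - u * A n)).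
  { pose proof (II_lin _ _ _ _ (- u) (VV n) (hA' n)) as H.
    refine (II_ext2 _ _ _ _ _ _ H); [intros x; unfold f, w; simpl; ring|ring]. }
  assert (E2 : IIex (fun v => f v + v * df v)).
  { pose proof (IIex_prod _ _ _ _ (Sp_xB n) (Sp_B n)) as P1.
    pose proof (IIex_prod _ _ _ _ (Sp_x _ _ (Sp_xdB n)) (Sp_B n)) as P2.
    pose proof (IIex_lin _ _ 1 P1 P2) as P3.
    pose proof (IIex_lin _ _ 1 P3 P3) as P4.
    eapply IIex_ext; [|exact P4]. intros x; unfold f, df; simpl; ring. }
  assert (E3 : IIex (fun v => (v - u) * (v * f v))).
  { pose proof (IIex_prod _ _ _ _ (Sp_x _ _ (Sp_xB n)) (Sp_xB n)) as P1.
    pose proof (IIex_prod _ _ _ _ (Sp_xB n) (Sp_xB n)) as P2.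
    pose proof (IIex_lin _ _ (- u) P1 P2) as P3.
    eapply IIex_ext; [|exact P3]. intros x; unfold f; simpl; ring. }
  destruct E2 as [a2 Ha2]. destruct E3 as [c2 Hc2].
  pose proof (ibp T u f df _ _ a2 c2 hT Hd Hc Ha Hcc
     ltac:(eapply II_ext; [|exact Ha2]; intros; simpl; unfold w; ring)
     ltac:(eapply II_ext; [|exact Hc2]; intros; simpl; unfold w; ring)) as R.
  rewrite R. unfold f. ring.
Qed.

Lemma caseB n : Sg n * (A (S n) + A n - u) = T * (sm A (S n) / Sg n).
Proof.
  set (f := fun v => v * B (S n) v * B n v).
  set (df := fun v => B (S n) v * B n v + v * dB (S n) v * B n v + v * B (S n) v * dB n v).
  assert (Hd : forall x, derivable_pt_lim f x (df x)).
  { intros x. unfold f, df.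
    pose proof (derivable_pt_lim_mult (fun v => v) (B (S n)) x _ _ (derivable_pt_lim_id x) (dB_deriv (S n) x)) as D1.
    pose proof (derivable_pt_lim_mult (fun v => v * B (S n) v) (B n) x _ _ D1 (dB_deriv n x)) as D2.
    replace (B (S n) x * B n x + x * dB (S n) x * B n x + x * B (S n) x * dB n x)
      with ((1 * B (S n) x + x * dB (S n) x) * B n x + x * B (S n) x * dB n x) by ring.
    exact D2. }
  assert (Hc : forall x, continuity_pt df x).
  { intros x. unfold df. pose proof (B_cont n x). pose proof (dB_cont n x). pose proof (cid x).
    pose proof (B_cont (S n) x). pose proof (dB_cont (S n) x).
    repeat first [assumption | apply ca | apply cm]. }
  assert (Ha : II (fun v => df v * weight T u v) (sm A (S n) / Sg n)).
  { pose proof (horth (S n) n) as H0. rewrite (proj2 (Nat.eqb_neq (S n) n) ltac:(lia)) in H0.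
    pose proof (Sp_orth _ _ (S n) (Sp_xdB n) (le_n _)) as Z.
    pose proof (II_lin _ _ _ _ 1 (II_lin _ _ _ _ 1 H0 (Yval n)) Z) as H.
    refine (II_ext2 _ _ _ _ _ _ H); [intros x; unfold df, w; simpl; ring|ring]. }
  assert (Hcc : II (fun v => (v - u) * f v * weight T u v) (Sg n * A (S n) + A n * Sg n - u * Sg n)).
  { pose proof (II_lin _ _ _ _ (- u) (VV2 n) (IIx_sym _ _ _ (hS n))) as H.
    refine (II_ext2 _ _ _ _ _ _ H); [intros x; unfold f, w; simpl; ring|ring]. }
  assert (E2 : IIex (fun v => f v + v * df v)).
  { pose proof (IIex_prod _ _ _ _ (Sp_xB (S n)) (Sp_B n)) as P1.
    pose proof (IIex_prod _ _ _ _ (Sp_x _ _ (Sp_xdB (S n))) (Sp_B n)) as P2.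
    pose proof (IIex_prod _ _ _ _ (Sp_x _ _ (Sp_xdB n)) (Sp_B (S n))) as P2'.
    pose proof (IIex_lin _ _ 2 P2 P1) as P3.
    pose proof (IIex_lin _ _ 1 P3 P2') as P4.
    eapply IIex_ext; [|exact P4]. intros x; unfold f, df; simpl; ring. }
  assert (E3 : IIex (fun v => (v - u) * (v * f v))).
  { pose proof (IIex_prod _ _ _ _ (Sp_x _ _ (Sp_xB (S n))) (Sp_xB n)) as P1.
    pose proof (IIex_prod _ _ _ _ (Sp_xB (S n)) (Sp_xB n)) as P2.
    pose proof (IIex_lin _ _ (- u) P1 P2) as P3.
    eapply IIex_ext; [|exact P3]. intros x; unfold f; simpl; ring. }
  destruct E2 as [a2 Ha2]. destruct E3 as [c2 Hc2].
  pose proof (ibp T u f df _ _ a2 c2 hT Hd Hc Ha Hcc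
     ltac:(eapply II_ext; [|exact Ha2]; intros; simpl; unfold w; ring)
     ltac:(eapply II_ext; [|exact Hc2]; intros; simpl; unfold w; ring)) as R.
  replace (Sg n * (A (S n) + A n - u)) with (Sg n * A (S n) + A n * Sg n - u * Sg n) by ring.
  rewrite R. unfold f. ring.
Qed.
End Main.

Theorem mainTheorem3 (T u : R) (hT : T > 0)
  (B : nat -> R -> R) (alpha beta : nat -> R) (m0 m1 : R)
  (hdeg : forall n : nat, poly_deg_pos_lead (B n) n)
  (horth : forall m n : nat,
     improper_integral_0_inf (fun v => B m v * B n v * weight T u v)
       (if Nat.eqb m n then 1 else 0))
  (hm0 : improper_integral_0_inf (fun v => weight T u v) m0)
  (hm1 : improper_integral_0_inf (fun v => v * weight T u v) m1)
  (halpha : forall n : nat,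
     improper_integral_0_inf (fun v => v * B n v ^ 2 * weight T u v) (alpha n))
  (hbeta0 : beta 0%nat = 0)
  (hbeta_nonneg : forall n : nat, 0 <= beta (S n))
  (hbeta : forall n : nat,
     improper_integral_0_inf (fun v => v * B n v * B (S n) v * weight T u v)
       (sqrt (beta (S n)))) :
  alpha 0%nat = m1 / m0 /\
  (forall n : nat,
     beta (S n) = 2 * T * INR n + T - beta n + u * alpha n - alpha n ^ 2 /\
     alpha (S n) = T / beta (S n) * sum_f_R0 alpha n - alpha n + u).
Proof.
  set (C := fun n => proj1_sig (constructive_indefinite_description _ (hdeg n))).
  assert (hC : forall n, C n n > 0 /\ forall x, B n x = sm (fun k => C n k * x ^ k) (S n)).
  { intros n. unfold C. destruct (constructive_indefinite_description _ (hdeg n)) as [c [h1 h2]].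
    simpl. split; auto. intros x. rewrite h2, sum_f_R0_sm. auto. }
  assert (hCpos : forall n, C n n > 0) by (intros; apply hC).
  assert (hCB : forall n x, B n x = sm (fun k => C n k * x ^ k) (S n)) by (intros; apply hC).
  clearbody C.
  set (Sg := fun n => sqrt (beta (S n))).
  assert (Hb : forall n, beta n = Sm1 Sg n ^ 2).
  { intros [|k]; simpl. rewrite hbeta0. ring. unfold Sg. rewrite Rmult_1_r, sqrt_sqrt; auto. }
  assert (HbS : forall n, beta (S n) = Sg n ^ 2) by (intros; apply (Hb (S n))).
  split.
  - pose proof (hCB 0%nat) as H0. simpl in H0.
    set (c := C 0%nat 0%nat) in *.
    assert (E1 : 1 = c * c * m0).
    { apply (II_unique _ _ _ (horth 0%nat 0%nat)).
      refine (II_ext2 _ _ _ _ _ _ (II_scal _ _ (c * c) hm0)); [intros x; rewrite H0; ring|ring]. }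
    assert (E2 : alpha 0%nat = c * c * m1).
    { apply (II_unique _ _ _ (halpha 0%nat)).
      refine (II_ext2 _ _ _ _ _ _ (II_scal _ _ (c * c) hm1)); [intros x; rewrite H0; ring|ring]. }
    rewrite E2. assert (m0 <> 0) by (intro Z; rewrite Z in E1; lra).
    field_simplify_eq; auto. replace (c ^ 2 * m1 * m0) with ((c * c * m0) * m1) by ring. rewrite <- E1. ring.
  - intros n.
    pose proof (caseA T u hT B C hCpos hCB horth alpha Sg halpha hbeta n) as HA.
    pose proof (caseB T u hT B C hCpos hCB horth alpha Sg halpha hbeta n) as HB.
    pose proof (Sg_nz T u B C hCpos hCB horth Sg hbeta n) as Hnz.
    rewrite (Hb n), HbS, sum_f_R0_sm. split.
    + simpl Sm1 in *. lra.
    + apply (Rmult_eq_reg_l (Sg n)); auto.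
      replace (Sg n * (T / Sg n ^ 2 * sm alpha (S n) - alpha n + u))
        with (T * (sm alpha (S n) / Sg n) - Sg n * alpha n + Sg n * u) by (field; auto).
      rewrite <- HB. ring.
Qed.
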